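(* Consider $m$ agents $i=1,\ldots,m$ with data generated as described in the context. Fix $\hat{\delta}>0$ and a time $t\ge\max(t_1,t_2,t_3)$, where $t_1=8n+16\log\frac{2}{\hat\delta}$, $t_2=\left(\frac{16\hat{\mu}(\sqrt{4n}+\sqrt{2\log\frac{2}{\hat\delta}})}{\sigma_x}\right)^2$, $t_3=2(n+l)\log\frac{1}{\hat\delta}$. On the event $E_3$ defined in the context, the matrix $\bar\beta_{t+1}=\frac1m\sum_{i=1}^m\sum_{j=1}^tx_{i,j}x_{i,j}^*$ satisfies $$\|\bar\beta_{t+1}^{-1}\|\le\frac{8}{\sigma_x^2t}.$$
   Context: Data model: each agent $i\in\{1,\dots,m\}$ observes at times $j=1,2,\ldots$ pairs $(x_{i,j},y_{i,j})$ with $y_{i,j}=\Theta x_{i,j}+\eta_{i,j}$, $\Theta\in\mathbb{R}^{l\times n}$ unknown, $x_{i,j}\sim\mathcal{N}(\mu_{i,j},\sigma_x^2I_n)$, $\eta_{i,j}\sim\mathcal{N}(0,\sigma_\eta^2I_l)$, all mutually independent over time and agents, with deterministic means and $\sup_{i,j}\|\mu_{i,j}\|=\hat\mu<\infty$; $\sigma_x,\sigma_\eta>0$. Let $\bar{\mu}_{i,t}=\frac{4}{t\sigma_x^2}\sum_{j=1}^t\mu_{i,j}\mu_{i,j}^*$. The event $E_3$ is the intersection over all $i=1,\ldots,m$ of $\{\|\sum_{j=1}^tx_{i,j}x_{i,j}^*\|\le t(\frac{19}{8}\sigma_x^2+\hat\mu^2)\}$, $\{\lambda_{\min}(\sum_{j=1}^tx_{i,j}x_{i,j}^*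 )\ge\frac{t\sigma_x^2}{8}\lambda_{\min}(I_n+\bar\mu_{i,t})\}$, and $\{\|\sum_{j=1}^t\eta_{i,j}x_{i,j}^*\|\le\sqrt t\,\sigma_\eta(4\sigma_x\sqrt{(n+l)\log\frac9{\hat\delta}}+\hat\mu(\sqrt{2(l+n)}+\sqrt{2\log\frac2{\hat\delta}}))\}$. $\|\cdot\|$ is the spectral norm, $A^*$ the transpose, $\lambda_{\min}$ the smallest eigenvalue. *)

(* Defs.v *)
From HB Require Import structures.
From mathcomp Require Import all_boot all_order all_algebra.
From mathcomp Require Import all_classical all_reals.
From mathcomp Require Import exp.
Set Implicit Arguments. Unset Strict Implicit. Unset Printing Implicit Defensive.
Import Order.TTheory GRing.Theory Num.Theory.
Local Open Scope ring_scope.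
Local Open Scope classical_set_scope.

Definition vnorm {R : realType} {k : nat} (v : 'cV[R]_k) : R :=
  Num.sqrt (\sum_(i < k) v i 0 ^+ 2).

Definition opnorm {R : realType} {p q : nat} (A : 'M[R]_(p, q)) : R :=
  sup [set vnorm (A *m v) | v in [set v : 'cV[R]_q | vnorm v <= 1]].

Definition lambda_min {R : realType} {k : nat} (A : 'M[R]_k) : R :=
  inf [set a : R | eigenvalue A a].

Definition gram {R : realType} {n : nat} (x : nat -> 'cV[R]_n) (t : nat) : 'M[R]_n :=
  \sum_(1 <= j < t.+1) (x j *m (x j)^T).

Definition mubar {R : realType} {n : nat} (sx : R) (mu : nat -> 'cV[R]_n) (t : nat)
  : 'M[R]_n :=
  (4 / (t%:R * sx ^+ 2)) *: \sum_(1 <= j < t.+1) (mu j *m (mu j)^T).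

(* the event E_3, evaluated at a realization (x, eta) *)
Definition E3 {R : realType} (m n l : nat) (sx seta muhat dhat : R) (t : nat)
  (mu : 'I_m -> nat -> 'cV[R]_n)
  (x : 'I_m -> nat -> 'cV[R]_n) (eta : 'I_m -> nat -> 'cV[R]_l) : Prop :=
  forall i : 'I_m,
    [/\ opnorm (gram (x i) t) <= t%:R * (19 / 8 * sx ^+ 2 + muhat ^+ 2),
        lambda_min (gram (x i) t) >=
          (t%:R * sx ^+ 2 / 8) * lambda_min (1%:M + mubar sx (mu i) t)
      & opnorm (\sum_(1 <= j < t.+1) (eta i j *m (x i j)^T)) <=
          Num.sqrt t%:R * seta *
            (4 * sx * Num.sqrt ((n + l)%:R * ln (9 / dhat))
             + muhat * (Num.sqrt (2 * (l + n)%:R) + Num.sqrt (2 * ln (2 / dhat))))].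

(* Main.v *)
Set Warnings "-all".
From HB Require Import structures.
From mathcomp Require Import all_boot all_order all_algebra.
From mathcomp Require Import all_classical all_reals.
From mathcomp Require Import exp topology normedtype derive.
From mathcomp Require Import lra ring.
Require Import Defs.
Import Order.TTheory GRing.Theory Num.Theory.
Import numFieldNormedType.Exports.
Local Open Scope ring_scope.
Local Open Scope classical_set_scope.
Section Core.
Context {R : realType}.

Definition rdot {k} (a b : 'rV[R]_k) : R := (a *m b^T) 0 0.

Lemma rdotE k (a b : 'rV[R]_k) : rdot a b = \sum_i a 0 i * b 0 i.
Proof. by rewrite /rdot mxE; apply: eq_bigr => i _; rewrite mxE. Qed.

Lemma rdot_ge0 k (a : 'rV[R]_k) : 0 <= rdot a a.
Proof. by rewrite rdotE; apply: sumr_ge0 => i _; rewrite -expr2 sqr_ge0. Qed.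

Lemma rdot_eq0 k (a : 'rV[R]_k) : rdot a a = 0 -> a = 0.
Proof.
rewrite rdotE => /eqP; rewrite psumr_eq0 => [/allP H|i _]; last by rewrite -expr2 sqr_ge0.
apply/rowP => i; rewrite mxE; have := H i (mem_index_enum _).
by rewrite /= -expr2 sqrf_eq0 => /eqP.
Qed.

Lemma rdotC k (a b : 'rV[R]_k) : rdot a b = rdot b a.
Proof. by rewrite !rdotE; apply: eq_bigr => i _; rewrite mulrC. Qed.

Lemma rdotDl k (a b c : 'rV[R]_k) : rdot (a + b) c = rdot a c + rdot b c.
Proof. by rewrite /rdot mulmxDl mxE. Qed.
Lemma rdotDr k (a b c : 'rV[R]_k) : rdot c (a + b) = rdot c a + rdot c b.
Proof. by rewrite rdotC rdotDl !(rdotC _ c). Qed.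
Lemma rdotZl k e (a c : 'rV[R]_k) : rdot (e *: a) c = e * rdot a c.
Proof. by rewrite /rdot -scalemxAl mxE. Qed.
Lemma rdotZr k e (a c : 'rV[R]_k) : rdot c (e *: a) = e * rdot c a.
Proof. by rewrite rdotC rdotZl rdotC. Qed.
Lemma rdotNl k (a c : 'rV[R]_k) : rdot (- a) c = - rdot a c.
Proof. by rewrite -scaleN1r rdotZl mulN1r. Qed.

Lemma rdotM k (S : 'M[R]_k) (a b : 'rV[R]_k) : rdot (a *m S) b = rdot a (b *m S^T).
Proof. by rewrite /rdot trmx_mul trmxK mulmxA. Qed.

Lemma rdot_cont k : continuous (fun v : 'rV[R]_k => rdot v v).
Proof.
have -> : (fun v : 'rV[R]_k => rdot v v) = (fun v => \sum_i v 0 i * v 0 i).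
  by apply: funext => v; rewrite rdotE.
apply: (@continuous_big R _ +%R 0 xpredT) => [|i _ x]; first exact: add_continuous.
by apply: continuousM; apply: coord_continuous.
Qed.

Lemma rq_cont k (S : 'M[R]_k) : continuous (fun v : 'rV[R]_k => rdot (v *m S) v).
Proof.
have -> : (fun v : 'rV[R]_k => rdot (v *m S) v) =
   (fun v => \sum_i (\sum_j v 0 j * S j i) * v 0 i).
  by apply: funext => v; rewrite rdotE; apply: eq_bigr => i _; rewrite mxE.
apply: (@continuous_big R _ +%R 0 xpredT) => [|i _ x]; first exact: add_continuous.
apply: continuousM; last exact: coord_continuous.
move: x; apply: (@continuous_big R _ +%R 0 xpredT) => [|j _ x]; first exact: add_continuous.
apply: continuousM; first exact: coord_continuous.
exact: cst_continuous.
Qed.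

Lemma sphere_compact k : compact [set v : 'rV[R]_k | rdot v v = 1].
Proof.
apply: bounded_closed_compact; last first.
  have -> : [set v : 'rV[R]_k | rdot v v = 1] = (fun v => rdot v v) @^-1` [set x | x = 1].
    by [].
  apply: preimage_closed; last exact: closed_eq.
  by move=> x _; apply: rdot_cont.
rewrite /= /bounded_near.
near=> M => v /= Av.
apply: (@le_trans _ _ 1); last by near: M; apply: nbhs_pinfty_ge; rewrite num_real.
rewrite [leLHS]/Num.norm /= mx_normrE; apply/bigmax_leP; split => // -[i j] _ /=.
have hi : i = 0 by rewrite ord1.
subst i.
have : v 0 j ^+ 2 <= 1.
  rewrite -Av rdotE (bigD1 j) //= expr2 lerDl.
  by apply: sumr_ge0 => l _; rewrite -expr2 sqr_ge0.
rewrite -real_normK ?num_real // => h.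
have := normr_ge0 (v 0 j).
nra.
Unshelve. all: end_near.
Qed.
Lemma small_p (p d C : R) : 0 < d -> C <= d - 1 -> 0 <= 2 * (-p) * (p * d) + p^+2 * C -> p = 0.
move=> hd hC h.
have h1 : p^+2 * C <= p^+2 * (d - 1) by apply: ler_wpM2l => //; apply: sqr_ge0.
have h2 : p^+2 * (d + 1) <= 0.
  have e1 : 2 * (-p) * (p * d) + p^+2 * C = p^+2 * C - 2 * (p^+2 * d) by ring.
  rewrite e1 in h.
  rewrite mulrDr mulr1; rewrite mulrDr mulrN mulr1 in h1.
  set a := p^+2 * C in h h1 *; set b := p^+2 * d in h h1 *.
  lra.
have hp : p^+2 <= 0.
  have hd1 : 0 < d + 1 by lra.
  by rewrite -(pmulr_lle0 _ hd1).
by apply/eqP; rewrite -sqrf_eq0 eq_le hp sqr_ge0.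
Qed.

Lemma rdot0l k (a : 'rV[R]_k) : rdot 0 a = 0.
Proof. by rewrite rdotE big1 // => i _; rewrite mxE mul0r. Qed.

Lemma rayleigh k (S : 'M[R]_k) : S^T = S -> (0 < k)%N ->
  exists q, [/\ eigenvalue S q, (forall w, q * rdot w w <= rdot (w *m S) w)
              & (forall a, eigenvalue S a -> q <= a)].
Proof.
move=> sS k0.
set A := [set v : 'rV[R]_k | rdot v v = 1].
have A0 : A !=set0.
  pose i0 := Ordinal k0.
  exists (\row_j (j == i0)%:R); rewrite /A /= rdotE (bigD1 i0) //= big1.
    by rewrite !mxE eqxx mulr1 addr0.
  by move=> j /negbTE hj; rewrite !mxE hj mulr0.
have [u uA umin] := compact_EVT_min A0 (sphere_compact k)
  (continuous_subspaceT (@rq_cont k S)).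
have u1 : rdot u u = 1 by move: uA; rewrite inE.
set q := rdot (u *m S) u.
have hmin : forall w, q * rdot w w <= rdot (w *m S) w.
  move=> w; have [->|w0] := eqVneq w 0.
    by rewrite mul0mx !rdot0l mulr0.
  have sp : 0 < rdot w w.
    by rewrite lt_neqAle rdot_ge0 andbT eq_sym; apply/eqP => /rdot_eq0 /eqP; rewrite (negbTE w0).
  set c := (Num.sqrt (rdot w w))^-1.
  have c2 : c ^+ 2 = (rdot w w)^-1 by rewrite /c exprVn sqr_sqrtr // ltW.
  have := umin (c *: w); rewrite !inE /A /= rdotZl rdotZr mulrA -expr2 c2 mulVf ?gt_eqF //.
  move=> /(_ erefl); rewrite -scalemxAl rdotZl rdotZr mulrA -expr2 c2.
  by rewrite ler_pdivlMl // mulrC.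
exists q; split => //; last first.
  move=> a /eigenvalueP [v va v0].
  have sp : 0 < rdot v v.
    by rewrite lt_neqAle rdot_ge0 andbT eq_sym; apply/eqP => /rdot_eq0 /eqP; rewrite (negbTE v0).
  by have := hmin v; rewrite va rdotZl ler_pM2r.
apply/eigenvalueP; exists u; last first.
  by apply/eqP => u0; move: u1; rewrite u0 rdot0l => /eqP; rewrite eq_sym oner_eq0.
set r := u *m S - q *: u.
set N := rdot r r.
set C := rdot (r *m S) r - q * rdot r r.
have sym : forall a b, rdot (a *m S) b = rdot (b *m S) a.
  by move=> a b; rewrite rdotM sS rdotC.
have hN : N = rdot (u *m S) r - q * rdot u r.
  by rewrite /N {1}/r rdotDl rdotNl rdotZl.
have key : forall e, 0 <= 2 * e * N + e ^+ 2 * C.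
  move=> e; have := hmin (u + e *: r).
  rewrite mulmxDl -scalemxAl !rdotDl !rdotDr !rdotZl !rdotZr u1 -/q.
  rewrite (sym r u) (rdotC _ r u) hN /C => h.
  move: h.
  set x1 := rdot u r. set x2 := rdot (u *m S) r. set x3 := rdot r r. set x4 := rdot (r *m S) r.
  move=> h.
  have -> : 2 * e * (x2 - q * x1) + e ^+ 2 * (x4 - q * x3) =
     (q + e * x2 + (e * x2 + e * (e * x4))) - q * (1 + e * x1 + (e * x1 + e * (e * x3))) by ring.
  by rewrite subr_ge0.
have N0 : N = 0.
  pose d := `|C| + 1.
  have hd : 0 < d by rewrite /d ltr_pwDr // normr_ge0.
  have hC : C <= d - 1 by rewrite /d addrK ler_norm.
  pose p := N / d.
  have hNp : N = p * d by rewrite /p divfK // gt_eqF.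
  have h := key (- p); rewrite hNp sqrrN in h.
  by rewrite hNp (@small_p _ _ _ hd hC h) mul0r.
by apply/eqP; rewrite -subr_eq0; apply/eqP/rdot_eq0.
Qed.

Lemma rdotMg p k (B : 'M[R]_(p, k)) (a : 'rV[R]_p) (b : 'rV[R]_k) :
  rdot (a *m B) b = rdot a (b *m B^T).
Proof. by rewrite /rdot trmx_mul trmxK mulmxA. Qed.

Lemma rdot_suml k I (r : seq I) (P : pred I) (f : I -> 'rV[R]_k) c :
  rdot (\sum_(j <- r | P j) f j) c = \sum_(j <- r | P j) rdot (f j) c.
Proof. by rewrite /rdot mulmx_suml summxE. Qed.

Lemma trmx_sumE p q I (r : seq I) (P : pred I) (f : I -> 'M[R]_(p, q)) :
  (\sum_(j <- r | P j) f j)^T = \sum_(j <- r | P j) (f j)^T.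
Proof. by apply/matrixP => i j; rewrite mxE !summxE; apply: eq_bigr => l _; rewrite mxE. Qed.

Lemma lmin_spec k (S : 'M[R]_k) : S^T = S -> (0 < k)%N ->
  (forall w, lambda_min S * rdot w w <= rdot (w *m S) w) /\
  exists2 v : 'rV[R]_k, v != 0 & v *m S = lambda_min S *: v.
Proof.
move=> sS k0; have [q [eq hw ha]] := @rayleigh _ S sS k0.
have -> : lambda_min S = q.
  rewrite /lambda_min; apply/eqP; rewrite eq_le; apply/andP; split.
    by apply: ge_inf => //; exists q => a /= /ha.
  by apply: lb_le_inf; [exists q | move=> a /= /ha].
by split => //; case/eigenvalueP: eq => v hv v0; exists v.
Qed.

Lemma vnormE k (v : 'cV[R]_k) : vnorm v = Num.sqrt (rdot v^T v^T).
Proof. by rewrite /vnorm rdotE; congr Num.sqrt; apply: eq_bigr => i _; rewrite !mxE expr2. Qed.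

Lemma sym_gram k (y : nat -> 'cV[R]_k) t : (gram y t)^T = gram y t.
Proof. by rewrite /gram trmx_sumE; apply: eq_bigr => j _; rewrite trmx_mul trmxK. Qed.

Lemma rdotNr k (a c : 'rV[R]_k) : rdot c (- a) = - rdot c a.
Proof. by rewrite rdotC rdotNl rdotC. Qed.

Lemma trmxDZ p q (A B : 'M[R]_(p, q)) c : (A + c *: B)^T = A^T + c *: B^T.
Proof. by apply/matrixP => i j; rewrite !mxE. Qed.

Lemma trmxZ' p q (B : 'M[R]_(p, q)) c : (c *: B)^T = c *: B^T.
Proof. by apply/matrixP => i j; rewrite !mxE. Qed.

Lemma vnorm0 k : vnorm (0 : 'cV[R]_k) = 0.
Proof. by rewrite vnormE trmx0 rdot0l sqrtr0. Qed.
End Core.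

Theorem proposition3 (R : realType) (m n l : nat) (sx seta muhat dhat : R)
  (mu : 'I_m -> nat -> 'cV[R]_n)
  (x : 'I_m -> nat -> 'cV[R]_n) (eta : 'I_m -> nat -> 'cV[R]_l) (t : nat) :
  (0 < m)%N -> (0 < n)%N -> (0 < l)%N ->
  0 < sx -> 0 < seta -> 0 < dhat ->
  has_ubound [set r : R | exists i j, (0 < j)%N /\ r = vnorm (mu i j)] ->
  muhat = sup [set r : R | exists i j, (0 < j)%N /\ r = vnorm (mu i j)] ->
  t%:R >= 8 * n%:R + 16 * ln (2 / dhat) ->
  t%:R >= ((16 * muhat * (Num.sqrt (4 * n%:R) + Num.sqrt (2 * ln (2 / dhat)))) / sx) ^+ 2 ->
  t%:R >= 2 * (n + l)%:R * ln (1 / dhat) ->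
  E3 sx seta muhat dhat t mu x eta ->
  opnorm (invmx (m%:R^-1 *: \sum_(i < m) gram (x i) t)) <= 8 / (sx ^+ 2 * t%:R).
Proof.
move=> m0 n0 l0 sx0 seta0 d0 _ _ _ _ _ E.
set B := m%:R^-1 *: \sum_(i < m) gram (x i) t.
have [t0|tpos] := eqVneq t 0%N.
  have B0 : B = 0.
    by rewrite /B big1 ?scaler0 // => i _; rewrite /gram t0 big_geq.
  have nu : (0 : 'M[R]_n) \notin unitmx.
    apply/negP => u; have := mulmxV u; rewrite mul0mx => /matrixP.
    move=> /(_ (Ordinal n0) (Ordinal n0)); rewrite !mxE eqxx /= => /eqP.
    by rewrite eq_sym oner_eq0.
  rewrite B0 invmx_out ?inE // t0 mulr0 invr0 mulr0.
  apply: ge_sup; first by exists 0; exists 0; rewrite /= ?vnorm0 ?ler01 // mul0mx vnorm0.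
  by move=> y [v _ <-]; rewrite mul0mx vnorm0.
have tR : 0 < t%:R :> R by rewrite ltr0n lt0n.
set c0 : R := t%:R * sx ^+ 2 / 8.
have c0p : 0 < c0 by rewrite /c0 divr_gt0 // mulr_gt0 // exprn_gt0.
have hG : forall i w, c0 * rdot w w <= rdot (w *m gram (x i) t) w.
  move=> i w; have [h1 _] := lmin_spec _ _ (sym_gram _ (x i) t) n0.
  apply: le_trans (h1 w); apply: ler_wpM2r; first exact: rdot_ge0.
  case: (E i) => _ hl _; apply: le_trans hl.
  rewrite -{1}(mulr1 c0) -/c0; apply: ler_wpM2l; first exact: ltW.
  set cc : R := 4 / (t%:R * sx ^+ 2).
  have cc0 : 0 <= cc by rewrite /cc divr_ge0 // mulr_ge0 ?ler0n ?sqr_ge0.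
  set M := 1%:M + mubar sx (mu i) t.
  have symM : M^T = M.
    rewrite /M /mubar trmxDZ trmx1 trmx_sumE; congr (_ + _ *: _).
    by apply: eq_bigr => j _; rewrite trmx_mul trmxK.
  have [_ [v v0 hv]] := lmin_spec _ _ symM n0.
  have Np : 0 < rdot v v.
    by rewrite lt_neqAle rdot_ge0 andbT eq_sym; apply/eqP => /rdot_eq0 /eqP; rewrite (negbTE v0).
  have e1 : rdot (v *m M) v = lambda_min M * rdot v v by rewrite hv rdotZl.
  have e2 : rdot v v <= rdot (v *m M) v.
    rewrite /M /mubar -/cc mulmxDr mulmx1 -scalemxAr mulmx_sumr rdotDl rdotZl lerDl.
    apply: mulr_ge0 => //; rewrite rdot_suml; apply: sumr_ge0 => j _.
    by rewrite mulmxA rdotMg trmxK rdot_ge0.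
  by move: e2; rewrite e1 -{1}(mul1r (rdot v v)) ler_pM2r.
have hB : forall w, c0 * rdot w w <= rdot (w *m B) w.
  move=> w; rewrite /B -scalemxAr rdotZl mulmx_sumr rdot_suml.
  have : \sum_(i < m) c0 * rdot w w <= \sum_(i < m) rdot (w *m gram (x i) t) w.
    by apply: ler_sum => i _; apply: hG.
  rewrite sumr_const card_ord => h.
  by rewrite ler_pdivlMl ?ltr0n // mulr_natl.
have symB : B^T = B.
  by rewrite /B trmxZ' trmx_sumE; congr (_ *: _); apply: eq_bigr => i _; rewrite sym_gram.
have unitB : B \in unitmx.
  rewrite unitmxE unitfE; apply/negP => /det0P [v v0 vB].
  have := hB v; rewrite vB rdot0l pmulr_rle0 // => h.
  have : rdot v v = 0 by apply/eqP; rewrite eq_le h rdot_ge0.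
  by move/rdot_eq0/eqP; rewrite (negbTE v0).
apply: ge_sup; first by exists 0; exists 0; rewrite /= ?vnorm0 ?ler01 // mulmx0 vnorm0.
move=> y [v hv <-].
rewrite /= vnormE -sqrtr1 ler_sqrt // in hv.
set w := invmx B *m v.
have Bw : w^T *m B = v^T by rewrite -symB -trmx_mul /w mulmxA mulmxV // mul1mx.
have h1 := hB w^T; rewrite Bw in h1.
have h2 := @rdot_ge0 _ n (c0 *: w^T - v^T).
rewrite !rdotDl !rdotDr !rdotNl !rdotNr !rdotZl !rdotZr (rdotC _ v^T w^T) in h2.
have h3 : c0 * (c0 * rdot w^T w^T) <= c0 * rdot w^T v^T.
  by apply: ler_wpM2l; [exact: ltW | rewrite rdotC].
have h4 : c0 ^+ 2 * rdot w^T w^T <= 1.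
  move: h2 h3 hv; set X := rdot w^T w^T; set Y := rdot w^T v^T; set Z := rdot v^T v^T.
  move=> h2 h3 hv.
  have e : c0 ^+ 2 * X = c0 * (c0 * X) by rewrite expr2 mulrA.
  rewrite e.
  set P := c0 * (c0 * X) in h2 h3 *; set Q := c0 * Y in h2 h3.
  lra.
have -> : 8 / (sx ^+ 2 * t%:R) = Num.sqrt (c0^-1 ^+ 2).
  rewrite sqrtr_sqr ger0_norm; last by rewrite invr_ge0 ltW.
  by rewrite /c0 invf_div (mulrC (t%:R)).
rewrite vnormE ler_sqrt ?sqr_ge0 // exprVn.
by rewrite -[c0 ^- 2]mulr1 ler_pdivlMl ?exprn_gt0.
Qed.
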